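(* Let $G$ be an extraspecial or almost extraspecial $2$-group of order $2^n$, $n\geq 3$. Then for every $0\leq k\leq n$, $$s_k(G)\leq s_k(D_8\times C_2^{n-3}).$$
   Context: A finite $2$-group $G$ is extraspecial if $Z(G)=G'=\Phi(G)$ has order $2$, and almost extraspecial if $G'=\Phi(G)$ has order $2$ and $Z(G)\cong C_4$. For a finite $2$-group $G$ of order $2^n$ and $0\le k\le n$, $s_k(G)$ is the number of subgroups of $G$ of order $2^k$. $D_8$ is the dihedral group of order $8$, $C_2^m$ the elementary abelian group of order $2^m$. *)

(* Defs.v *)
From mathcomp Require Import all_boot all_fingroup all_algebra all_solvable.
Set Implicit Arguments. Unset Strict Implicit. Unset Printing Implicit Defensive.
Local Open Scope group_scope.

Definition s_k (gT : finGroupType) (G : {set gT}) (k : nat) : nat :=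
  #|[set H : {group gT} | (H \subset G) && (#|H| == (2 ^ k)%N)]|.

Definition extraspecial2 (gT : finGroupType) (G : {set gT}) : Prop :=
  [/\ 'Z(G) = G^`(1), G^`(1) = 'Phi(G) & #|'Z(G)| = 2%N].

Definition almost_extraspecial2 (gT : finGroupType) (G : {set gT}) : Prop :=
  [/\ G^`(1) = 'Phi(G), #|G^`(1)| = 2%N, cyclic 'Z(G) & #|'Z(G)| = 4%N].

(* The group D_8 x C_2^m, with C_2^m realized as the additive group of 'rV['Z_2]_m *)
Definition D8xC2 (m : nat) : finGroupType := ('D_8 * 'rV['Z_2]_m)%type.

(* Main.v *)
Require Import Defs.
From mathcomp Require Import all_boot all_fingroup all_algebra all_solvable.
From mathcomp Require Import zify.
Set Implicit Arguments. Unset Strict Implicit. Unset Printing Implicit Defensive.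
Local Open Scope group_scope.

Lemma sum_bool_card (T : finType) (A : {pred T}) (P : pred T) :
  (\sum_(x in A) (P x : nat))%N = #|[pred x in A | P x]|.
Proof.
rewrite -sum1_card [RHS]big_mkcondr /=; apply: eq_bigr => x _.
by case: (P x).
Qed.

Lemma bij_count (gT : finGroupType) (C N : {group gT})
  (P : {group gT} -> bool) (Pb : {group coset_of N} -> bool) k :
  N <| C -> #|N| = 2 ->
  (forall H : {group gT}, N \subset H -> H \subset C -> P H = Pb (H / N)%G) ->
  #|[set H : {group gT} | [&& N \subset H, H \subset C, #|H| == (2 ^ k.+1)%N & P H]]| =
  #|[set Hb : {group coset_of N} | [&& Hb \subset C / N, #|Hb| == (2 ^ k)%N & Pb Hb]]|.
Proof.
move=> nNC oN hP.
have [sNC nNC'] := andP nNC.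
have cardq (H : {group gT}) : N \subset H -> H \subset C -> (#|H / N| * 2)%N = #|H|.
  move=> sNH sHC; rewrite card_quotient ?(subset_trans sHC) // -oN.
  by rewrite -(Lagrange sNH) mulnC.
rewrite -(card_in_imset (f := fun H : {group gT} => (H / N)%G)).
  apply: eq_card => Hb; rewrite [in RHS]inE; apply/imsetP/idP.
    case=> H; rewrite inE => /and4P[sNH sHC /eqP oH pH] ->.
    rewrite /= quotientS //= -hP // pH andbT.
    by rewrite -(eqn_pmul2r (isT : 0 < 2)) cardq // oH expnSr.
  case/and3P => sHbC /eqP oHb pHb.
  case/inv_quotientS: sHbC => // H defHb sNH sHC.
  have eHb : Hb = (H / N)%G by apply/val_inj.
  exists H => //; rewrite inE sNH sHC hP //= -eHb pHb andbT.
  by rewrite -cardq // -[H / N]/(gval (H / N)%G) -eHb oHb expnSr.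
move=> H1 H2; rewrite !inE => /and4P[s1 t1 _ _] /and4P[s2 t2 _ _] e.
apply/val_inj; apply: (quotient_inj (H:=N)).
- exact: normalS nNC.
- exact: normalS nNC.
- by move/(congr1 val): e.
Qed.

Definition Bc (gT : finGroupType) (K : {set gT}) (z : gT) (k : nat) : nat :=
  #|[set H : {group gT} | [&& H \subset K, #|H| == (2 ^ k)%N & z \notin H]]|.
Definition Ac (gT : finGroupType) (K : {set gT}) (z : gT) (k : nat) : nat :=
  #|[set H : {group gT} | [&& H \subset K, #|H| == (2 ^ k)%N & z \in H]]|.
Definition cls (gT : finGroupType) (K : {group gT}) (z : gT) : Prop :=
  [/\ z \in 'Z(K), z != 1, z ^+ 2 = 1 &
      forall x, x \in K -> x ^+ 2 = 1 \/ x ^+ 2 = z].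
Definition exp2 (gT : finGroupType) (K : {set gT}) : Prop :=
  forall x, x \in K -> x ^+ 2 = 1.

Section Basic.
Variable gT : finGroupType.
Implicit Types (K H : {group gT}) (x y z : gT).

Lemma inv_sq x : x ^+ 2 = 1 -> x^-1 = x.
Proof. by move=> e; apply/eqP; rewrite eq_invg_mul -expg2 e. Qed.

Lemma exp2_abelian H : exp2 H -> abelian H.
Proof.
move=> e; apply/centsP => x Hx y Hy; rewrite /commute.
rewrite -(inv_sq (e _ (groupM Hy Hx))) invMg (inv_sq (e _ Hx)) (inv_sq (e _ Hy)).
by [].
Qed.

Lemma part_count K z k : s_k K k = Ac K z k + Bc K z k.
Proof.
rewrite /s_k /Ac /Bc -(cardsID [set H : {group gT} | z \in H]).
congr (_ + _)%N; apply: eq_card => H; rewrite !inE; 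
  by case: (H \subset K); case: (#|H| == _); case: (z \in H).
Qed.

Lemma order2 x : x ^+ 2 = 1 -> x != 1 -> #[x] = 2.
Proof. by move=> e n1; apply: nt_prime_order. Qed.

Lemma Ac_succ K z k : z \in 'Z(K) -> z != 1 -> z ^+ 2 = 1 ->
  Ac K z k.+1 = s_k (K / <[z]>) k.
Proof.
move=> Zz nz z2; have /centerP[Kz cz] := Zz.
have nNK : <[z]> <| K.
  rewrite /normal cycle_subG Kz /= cents_norm // cent_cycle sub_cent1.
  by case/setIP: Zz.
transitivity #|[set H : {group gT} |
   [&& <[z]> \subset H, H \subset K, #|H| == (2 ^ k.+1)%N & true]]|.
  rewrite /Ac; apply: eq_card => H; rewrite !inE cycle_subG andbT.
  by case: (H \subset K); case: (#|H| == _); case: (z \in H).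
rewrite (@bij_count gT K <[z]> (fun _ => true) (fun _ => true) k nNK (order2 z2 nz)) //.
by rewrite /s_k; apply: eq_card => H; rewrite !inE andbT.
Qed.

End Basic.

Section Cls.
Variable gT : finGroupType.
Implicit Types (K H : {group gT}) (x y z : gT).

Lemma cls_sq K z x : cls K z -> x \in K -> x ^+ 2 \in <[z]>.
Proof.
case=> _ _ _ h Kx; case: (h x Kx) => ->; first exact: group1.
exact: cycle_id.
Qed.

Lemma cls_quo_exp2 K z : cls K z -> exp2 (K / <[z]>).
Proof.
move=> c yb; case/morphimP => y Ny Ky ->.
by rewrite -morphX //; apply: coset_id; apply: (cls_sq c Ky).
Qed.

Lemma cls_nontriv K z : cls K z -> z \in K.
Proof. by case=> /centerP[]. Qed.

Section Kx.
Variables (K : {group gT}) (z x : gT).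
Hypotheses (c : cls K z) (Kx : x \in K) (x2 : x ^+ 2 = 1) (nx1 : x != 1)
  (nxz : x != z).

Let Cx := 'C_K[x].

Lemma Kx_norm : Cx \subset 'N(<[x]>).
Proof. by rewrite cents_norm // cent_cycle subsetIr. Qed.

Lemma Kx_normal : <[x]> <| Cx.
Proof.
rewrite /normal Kx_norm andbT cycle_subG inE Kx /=.
exact: cent1id.
Qed.

Lemma z_in_Cx : z \in Cx.
Proof.
have [Zz _ _ _] := c; have /centerP[Kz cz] := Zz.
by rewrite inE Kz /=; apply/cent1P; apply: cz.
Qed.

Lemma card_Kx : (#|Cx / <[x]>| * 2)%N = #|Cx|.
Proof.
have [sxC _] := andP Kx_normal.
rewrite card_quotient ?Kx_norm // -(order2 x2 nx1).
by rewrite -(Lagrange sxC) mulnC.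
Qed.

Lemma cls_Kx : cls (Cx / <[x]>)%G (coset <[x]> z).
Proof.
have [Zz nz1 z2 h] := c.
have nN := Kx_norm; have Cz := z_in_Cx.
have Nz : z \in 'N(<[x]>) by apply: (subsetP nN).
split.
- apply/centerP; split; first exact: mem_quotient.
  move=> yb; case/morphimP => y Ny Cy ->.
  have /centerP[_ cz] := Zz.
  have Ky : y \in K by case/setIP: Cy.
  by rewrite /commute -!morphM // (cz y Ky).
- apply: contra nz1 => /eqP e.
  have zx : z \in [set 1; x] by rewrite -cycle2g ?order2 //; exact: coset_idr Nz e.
  move: zx; rewrite !inE => /orP[] // /eqP ezx.
  by move: nxz; rewrite ezx eqxx.
- by rewrite -morphX // z2 morph1.
- move=> yb; case/morphimP => y Ny Cy ->.
  have Ky : y \in K by case/setIP: Cy.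
  by rewrite -morphX //; case: (h y Ky) => ->; [left; rewrite morph1 | right].
Qed.

End Kx.

End Cls.

Definition wt (gT : finGroupType) (K : {group gT}) (z : gT) (k : nat) (x : gT) : nat :=
  if [&& x ^+ 2 == 1, x != 1 & x != z]
  then Bc ('C_K[x] / <[x]>) (coset <[x]> z) k else 0.

Section PairCount.
Variable gT : finGroupType.
Implicit Types (K H : {group gT}) (x y z : gT).

Lemma pair_count K z k : cls K z ->
  ((2 ^ k.+1).-1 * Bc K z k.+1 = \sum_(x in K) wt K z k x)%N.
Proof.
move=> c; have [Zz nz1 z2 h] := c.
set S := [set H : {group gT} | [&& H \subset K, #|H| == (2 ^ k.+1)%N & z \notin H]].
have step1 : (\sum_(H in S) #|H :\ 1%g|)%N = ((2 ^ k.+1).-1 * #|S|)%N.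
  rewrite mulnC -sum_nat_const; apply: eq_bigr => H; rewrite inE.
  case/and3P=> _ /eqP oH _.
  by rewrite -oH (cardsD1 1 H) group1.
have step2 : forall H, H \in S -> #|H :\ 1%g| = (\sum_(x in K) (x \in H :\ 1%g : nat))%N.
  move=> H; rewrite inE => /and3P[sHK _ _].
  rewrite sum_bool_card; apply: eq_card => x; rewrite !inE.
  by case xH: (x \in H); rewrite ?(subsetP sHK _ xH) ?andbF ?andbT.
rewrite /Bc -/S -step1 (eq_bigr _ step2) exchange_big; apply: eq_bigr => x Kx.
rewrite sum_bool_card /wt.
case: ifP => [/and3P[/eqP x2 nx1 nxz] | hx].
  transitivity #|[set H : {group gT} | [&& <[x]> \subset H, H \subset 'C_K[x],
                  #|H| == (2 ^ k.+1)%N & z \notin H]]|.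
    apply: eq_card => H; rewrite !inE; apply/idP/idP.
      case/andP => /and3P[sHK oH zH] /andP[_ xH].
      rewrite cycle_subG xH oH zH subsetI sHK sub_cent1 /= andbT.
      have aH : abelian H.
        apply: exp2_abelian => y Hy.
        case: (h y (subsetP sHK _ Hy)) => // e.
        by move: zH; rewrite -e groupX.
      exact: (subsetP aH).
    case/and4P => xH sHC oH zH.
    rewrite (subset_trans sHC (subsetIl _ _)) oH zH /=.
    by rewrite nx1 -cycle_subG.
  rewrite (@bij_count gT 'C_K[x] <[x]> (fun H => z \notin H)
             (fun Hb => coset <[x]> z \notin Hb) k (Kx_normal Kx)
             (order2 x2 nx1)) //.
  move=> H sNH sHC /=; congr negb; apply/idP/idP => [zH|].
    by apply: mem_quotient.
  have nNH : <[x]> <| H by apply: normalS sNH sHC (Kx_normal Kx).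
  have Nz : z \in 'N(<[x]>) by apply: (subsetP (Kx_norm K x)); apply: z_in_Cx.
  by move=> zq; rewrite -(quotientGK nNH); apply: mem_morphpre.
apply: eq_card0 => H; rewrite !inE; apply/negP.
case/andP => /and3P[sHK _ zH] /andP[nx1 xH].
move: hx; case: (h x (subsetP sHK _ xH)) => e.
  rewrite e eqxx nx1 /= => /negbT/negPn/eqP exz; by move: zH; rewrite -exz xH.
by move: zH; rewrite -e groupX.
Qed.

End PairCount.

Section Exp2Gen.
Variable gT : finGroupType.
Implicit Types (K H : {group gT}) (x y z : gT).

Lemma Bc0 (K : {group gT}) z : z != 1 -> Bc K z 0 = 1%N.
Proof.
move=> nz; rewrite /Bc; apply: (@eq_card1 _ 1%G) => H; rewrite !inE.
apply/idP/idP.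
  case/and3P=> _ oH _; apply/eqP/val_inj => /=.
  by apply: card_le1_trivg; rewrite (eqP oH).
move/eqP => -> /=; rewrite sub1G cards1 /=.
by apply: contra nz; rewrite inE.
Qed.

Lemma s_k0 (K : {group gT}) : s_k K 0 = 1%N.
Proof.
rewrite /s_k; apply: (@eq_card1 _ 1%G) => H; rewrite !inE.
apply/idP/idP.
  case/andP=> _ oH; apply/eqP/val_inj => /=.
  by apply: card_le1_trivg; rewrite (eqP oH).
by move/eqP => -> /=; rewrite sub1G cards1.
Qed.

Lemma exp2_cls K z : exp2 K -> z \in K -> z != 1 -> cls K z.
Proof.
move=> e Kz nz; have aK := exp2_abelian e.
split => //; last by move=> x Kx; left; apply: e.
- by apply/centerP; split => // y Ky; apply: (centsP aK).
- exact: e.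
Qed.

Lemma exp2_Cx K x : exp2 K -> x \in K -> 'C_K[x] = K.
Proof.
move=> e Kx; apply/setIidPl; rewrite sub_cent1.
exact: (subsetP (exp2_abelian e)).
Qed.

Lemma exp2_Kx K x : exp2 K -> exp2 ('C_K[x] / <[x]>).
Proof.
move=> e yb; case/morphimP => y Ny Cy ->.
have Ky : y \in K by case/setIP: Cy.
by rewrite -morphX // e // morph1.
Qed.

End Exp2Gen.

Definition zm (m : nat) : 'rV['Z_2]_m := const_mx 1%R.
Definition e (m k : nat) : nat := Bc [set: 'rV['Z_2]_m] (zm m) k.
Definition Fc (m j : nat) : nat := s_k [set: 'rV['Z_2]_m] j.

Lemma Em_exp2 m : exp2 [set: 'rV['Z_2]_m].
Proof.
move=> b _; rewrite expgS expg1; change (b + b = 0)%R; apply/matrixP => i j.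
rewrite !mxE; apply/val_inj; by case: (b i j) => -[|[|k]] //= Hk.
Qed.

Lemma card_Em m : #|[set: 'rV['Z_2]_m]| = (2 ^ m)%N.
Proof. by rewrite cardsT card_mx card_ord mul1n. Qed.

Lemma zm_neq1 m : zm m.+1 != 1.
Proof.
apply/negP => /eqP /matrixP /(_ ord0 ord0); rewrite !mxE.
by move/(congr1 val).
Qed.

Section Exp2Count.

Lemma exp2_rec (gT : finGroupType) (K : {group gT}) z k m :
  exp2 K -> z \in K -> z != 1 -> #|K| = (2 ^ m.+1)%N ->
  (forall (hT : finGroupType) (K' : {group hT}) z', exp2 K' -> z' \in K' -> z' != 1 ->
       #|K'| = (2 ^ m)%N -> Bc K' z' k = e m k) ->
  ((2 ^ k.+1).-1 * Bc K z k.+1 = (2 ^ m.+1 - 2) * e m k)%N.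
Proof.
move=> ex Kz nz oK IH.
rewrite (pair_count k (exp2_cls ex Kz nz)).
transitivity (\sum_(x in K) (if (x != 1%g) && (x != z) then e m k else 0))%N.
  apply: eq_bigr => x Kx; rewrite /wt ex // eqxx /=.
  case: ifP => // /andP[nx1 nxz].
  have c := exp2_cls ex Kz nz.
  have [Zq nq _ _] := cls_Kx c Kx (ex _ Kx) nx1 nxz.
  apply: IH.
  - exact: exp2_Kx.
  - by case/centerP: Zq.
  - exact: nq.
  - apply/eqP; rewrite -(eqn_pmul2r (isT : 0 < 2)) card_Kx // ?ex //.
    by rewrite exp2_Cx // oK expnSr.
rewrite -big_mkcondr sum_nat_const; congr (_ * _)%N.
have -> : #|[pred x in K | (x != 1%g) && (x != z)]| = #|K :\: [set 1%g; z]|.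
  by apply: eq_card => x; rewrite !inE; case: (x \in K); case: (x == 1); case: (x == z).
rewrite cardsD oK; congr (_ - _)%N.
rewrite (setIidPr _); first by rewrite cards2 eq_sym nz.
by apply/subsetP => x; rewrite !inE => /orP[] /eqP ->.
Qed.

Lemma exp2_Bc k : forall (gT : finGroupType) (K : {group gT}) z m,
  exp2 K -> z \in K -> z != 1 -> #|K| = (2 ^ m)%N -> Bc K z k = e m k.
Proof.
elim: k => [|k IHk] gT K z m ex Kz nz oK.
  rewrite Bc0 // /e; case: m oK => [|m] oK; last by rewrite Bc0 // zm_neq1.
  move: oK; rewrite expn0 => /eqP; rewrite -trivg_card1 => /eqP K1.
  by move: Kz nz; rewrite K1 inE => ->.
case: m oK => [|m] oK.
  move: oK; rewrite expn0 => /eqP; rewrite -trivg_card1 => /eqP K1.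
  by move: Kz nz; rewrite K1 inE => ->.
apply/eqP; rewrite -(eqn_pmul2l (_ : 0 < (2 ^ k.+1).-1)); last first.
  by rewrite -ltnS prednK ?expn_gt0 // (ltn_exp2l 0).
rewrite (exp2_rec ex Kz nz oK (fun hT K0 z0 => IHk hT K0 z0 m)) /e.
rewrite (exp2_rec (@Em_exp2 m.+1) (in_setT _) (zm_neq1 m) (card_Em _) (fun hT K0 z0 => IHk hT K0 z0 m)).
by [].
Qed.

Lemma e_rec m k : ((2 ^ k.+1).-1 * e m.+1 k.+1 = (2 ^ m.+1 - 2) * e m k)%N.
Proof.
exact: (exp2_rec (@Em_exp2 m.+1) (in_setT _) (zm_neq1 m) (card_Em _) (fun hT K0 z0 => @exp2_Bc k hT K0 z0 m)).
Qed.

Lemma e0 m : e m.+1 0 = 1%N.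
Proof. by rewrite /e Bc0 // zm_neq1. Qed.

Lemma e_0k k : e 0 k = 0%N.
Proof.
rewrite /e; apply: eq_card0 => H; rewrite !inE.
have -> : zm 0 = 1 by apply/matrixP => i [].
by rewrite group1 !andbF.
Qed.

End Exp2Count.

Lemma e_mono m k : e m k <= e m.+1 k.
Proof.
elim: k m => [|k IHk] [|m].
- by rewrite e_0k.
- by rewrite !e0.
- by rewrite e_0k.
rewrite -(leq_pmul2l (_ : 0 < (2 ^ k.+1).-1)); last first.
  by rewrite -ltnS prednK ?expn_gt0 // (ltn_exp2l 0).
rewrite !e_rec; apply: leq_mul; last exact: IHk.
by apply: leq_sub2r; rewrite leq_exp2l.
Qed.

Lemma e_monoS a b k : a <= b -> e a k <= e b k.
Proof.
move/subnKC => <-; elim: (b - a) => [|d IH]; first by rewrite addn0.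
by rewrite addnS (leq_trans IH) ?e_mono.
Qed.

Section KxPow.
Variable gT : finGroupType.

Lemma Kx_pow (K : {group gT}) z x m : cls K z -> x \in K -> x ^+ 2 = 1 ->
  x != 1 -> x != z -> #|K| = (2 ^ m)%N ->
  exists j, #|'C_K[x] / <[x]>| = (2 ^ j)%N /\
     (if x \in 'Z(K) then j.+1 = m else j.+2 <= m).
Proof.
move=> c Kx x2 nx1 nxz oK.
have sCK : 'C_K[x] \subset K by apply: subsetIl.
have : #|'C_K[x]| %| 2 ^ m by rewrite -oK cardSg.
case/(@dvdn_pfactor 2 _ _ isT) => i lim oC.
have cq := card_Kx Kx x2 nx1; rewrite oC in cq.
case: i lim oC cq => [|i] lim oC cq.
  by move: cq; rewrite expn0; case: #|_|.
exists i; split.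
  by apply/eqP; rewrite -(eqn_pmul2r (isT : 0 < 2)) cq expnSr.
case: ifP => Zx.
  have eC : 'C_K[x] = K.
    apply/setIidPl; rewrite sub_cent1; by case/setIP: Zx.
  move: oC; rewrite eC oK => /eqP; rewrite eqn_exp2l // => /eqP.
  by [].
have pr : 'C_K[x] \proper K.
  rewrite properEneq sCK andbT; apply/negP => /eqP eC.
  move: Zx; rewrite /center inE Kx /= -sub_cent1 -{1}eC subsetIr.
  by [].
have := proper_card pr; rewrite oC oK ltn_exp2l //.
Qed.

End KxPow.

Lemma gen_bound k : forall (gT : finGroupType) (K : {group gT}) z m,
  cls K z -> #|K| = (2 ^ m)%N -> Bc K z k <= e m k.
Proof.
elim: k => [|k IHk] gT K z m c oK; have [Zz nz1 z2 h] := c;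
  have Kz : z \in K by case/centerP: Zz.
  case: m oK => [|m] oK; last by rewrite Bc0 // e0.
  move: oK; rewrite expn0 => /eqP; rewrite -trivg_card1 => /eqP K1.
  by move: Kz nz1; rewrite K1 inE => ->.
case: m oK => [|m] oK.
  move: oK; rewrite expn0 => /eqP; rewrite -trivg_card1 => /eqP K1.
  by move: Kz nz1; rewrite K1 inE => ->.
rewrite -(leq_pmul2l (_ : 0 < (2 ^ k.+1).-1)); last first.
  by rewrite -ltnS prednK ?expn_gt0 // (ltn_exp2l 0).
rewrite pair_count // e_rec.
apply: (@leq_trans (\sum_(x in K) (if (x != 1%g) && (x != z) then e m k else 0))%N).
  apply: leq_sum => x Kx; rewrite /wt.
  case: ifP => // /and3P[/eqP x2 nx1 nxz]; rewrite nx1 nxz /=.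
  have [j [oj hj]] := Kx_pow c Kx x2 nx1 nxz oK.
  apply: (leq_trans (IHk _ _ _ j (cls_Kx c Kx x2 nx1 nxz) oj)).
  apply: e_monoS; move: hj; case: ifP => _; first by case=> ->.
  by move=> hj; apply: ltnW.
rewrite -big_mkcondr sum_nat_const; apply: leq_mul => //.
have -> : #|[pred x in K | (x != 1%g) && (x != z)]| = #|K :\: [set 1%g; z]|.
  by apply: eq_card => x; rewrite !inE; case: (x \in K); case: (x == 1%g); case: (x == z).
rewrite cardsD oK (setIidPr _); first by rewrite cards2 eq_sym nz1.
by apply/subsetP => x; rewrite !inE => /orP[] /eqP ->.
Qed.

Section SqLemmas.
Variables (gT : finGroupType) (K : {group gT}) (z : gT).
Hypothesis c : cls K z.

Lemma cls_norm : K \subset 'N(<[z]>).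
Proof.
have [Zz _ _ _] := c.
by rewrite cents_norm // cent_cycle sub_cent1; case/setIP: Zz.
Qed.

Lemma cls_oz : #[z] = 2.
Proof. by have [_ nz z2 _] := c; apply: order2. Qed.

Lemma cls_Zel w : w \in <[z]> -> w = 1 \/ w = z.
Proof.
rewrite (cycle2g cls_oz) !inE => /orP[] /eqP ->; by [left | right].
Qed.

Lemma cls_cent w g : w \in <[z]> -> g \in K -> commute w g.
Proof.
have [Zz _ _ _] := c; have /centerP[_ cz] := Zz.
by case/cls_Zel => -> Kg; [apply: commute_sym; apply: commute1 | apply: cz].
Qed.

Lemma cls_comm u v : u \in K -> v \in K -> [~ u, v] \in <[z]>.
Proof.
move=> Ku Kv.
have ab : abelian (K / <[z]>)%G := exp2_abelian (cls_quo_exp2 c).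
have Nu : u \in 'N(<[z]>) by apply: (subsetP cls_norm).
have Nv : v \in 'N(<[z]>) by apply: (subsetP cls_norm).
apply: coset_idr; first by rewrite groupR.
rewrite morphR //; apply/eqP/commgP.
by apply: (centsP ab); apply: mem_quotient.
Qed.

Lemma sqM a b : a \in K -> b \in K -> (a * b) ^+ 2 = a ^+ 2 * b ^+ 2 * [~ b, a].
Proof.
move=> Ka Kb.
have cc : commute [~ b, a] b by apply: cls_cent (cls_comm Kb Ka) Kb.
rewrite !expg2; move: (commgC b a) cc; move: [~ b, a] => cm e cc.
by rewrite mulgA -(mulgA a b a) e !mulgA -(mulgA _ cm b) cc !mulgA.
Qed.

Lemma cls_sq_cent a : a \in K -> a ^+ 2 \in <[z]>.
Proof. exact: cls_sq c. Qed.

Lemma three_q : ~~ abelian K ->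
  (4 * #|[set x in K | x ^+ 2 == 1%g]| <= 3 * #|K|)%N.
Proof.
have [Zz nz z2 h] := c.
rewrite abelianE => /subsetPn [v Kv nv].
have [u Ku nu] : exists2 u, u \in K & u \notin 'C[v].
  by apply/subsetPn; rewrite sub_cent1.
have cz : [~ v, u] = z.
  case: (cls_Zel (cls_comm Kv Ku)) => // /eqP /commgP cvu.
  by case/negP: nu; apply/cent1P; apply: commute_sym.
set S := [set x in K | x ^+ 2 == 1%g].
have key : forall x, x \in K ->
  ~~ [&& x ^+ 2 == 1, (x * u) ^+ 2 == 1, (x * v) ^+ 2 == 1 & (x * (u * v)) ^+ 2 == 1].
  move=> x Kx; apply/negP => /and4P[/eqP x2 /eqP xu2 /eqP xv2 /eqP xuv2].
  have Kxu : x * u \in K by rewrite groupM.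
  rewrite sqM // x2 mul1g in xv2.
  rewrite mulgA sqM // xu2 mul1g commgMJ in xuv2.
  have e1 : [~ v, x] ^ u = [~ v, x].
    by rewrite conjgE (cls_cent (cls_comm Kv Kx) Ku) mulKg.
  rewrite e1 in xuv2.
  have e2 : forall p q : gT, commute (v ^+ 2) p -> v ^+ 2 * (p * q) = p * (v ^+ 2 * q).
    by move=> p q cpq; rewrite mulgA cpq -mulgA.
  rewrite (e2 _ _ (cls_cent (cls_sq_cent Kv) (groupR Kv Ku))) in xuv2.
  rewrite xv2 mulg1 cz in xuv2.
  by rewrite xuv2 eqxx in nz.
have cS g : g \in K -> #|[pred x in K | (x * g) ^+ 2 == 1%g]| = #|S|.
  move=> Kg; rewrite -(card_rcoset S g^-1); apply: eq_card => x.
  by rewrite [in RHS]mem_rcoset invgK !inE groupMr.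
have c1 : #|[pred x in K | x ^+ 2 == 1%g]| = #|S|.
  by apply: eq_card => x; rewrite !inE.
have sum4 : (\sum_(x in K) ((x ^+ 2 == 1%g) + ((x * u) ^+ 2 == 1%g) +
     ((x * v) ^+ 2 == 1%g) + ((x * (u * v)) ^+ 2 == 1%g)))%N = (4 * #|S|)%N.
  rewrite !big_split /= !sum_bool_card c1 !cS ?groupM //.
  by rewrite !mulSn mul0n addn0 !addnA.
rewrite -sum4 mulnC -sum_nat_const; apply: leq_sum => x Kx.
move: (key x Kx).
by case: (x ^+ 2 == 1); case: ((x * u) ^+ 2 == 1); case: ((x * v) ^+ 2 == 1);
   case: ((x * (u * v)) ^+ 2 == 1).
Qed.

Lemma S_Omega : (exists2 y, y \in K & y ^+ 2 != 1) ->
  (#|[set x in K | x ^+ 2 == 1%g]| + #|[set x in K | (x ^+ 2 == 1%g) && (x \in 'Z(K))]|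
   <= #|K|)%N.
Proof.
have [Zz nz z2 h] := c.
case=> y Ky ny.
have y2 : y ^+ 2 = z by case: (h y Ky) => // e; rewrite e eqxx in ny.
set S := [set x in K | x ^+ 2 == 1%g].
set O := [set x in K | (x ^+ 2 == 1%g) && (x \in 'Z(K))].
have sub : O :* y \subset K :\: S.
  apply/subsetP => w; rewrite mem_rcoset inE => /andP[Kx /andP[/eqP x2 Zx]].
  rewrite -(mulgKV y w); move: (w * y^-1) Kx x2 Zx => x Kx x2 Zx.
  have cxy : commute x y by case/centerP: Zx => _; apply.
  rewrite !inE groupM // andbT expgMn // x2 mul1g y2 nz.
  by [].
have := subset_leq_card sub; rewrite card_rcoset cardsD (setIidPr _); last first.
  by apply/subsetP => x; rewrite inE => /andP[].
move=> hO; rewrite addnC -(subnK (_ : #|S| <= #|K|)); last first.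
  by apply: subset_leq_card; apply/subsetP => x; rewrite inE => /andP[].
by rewrite leq_add2r.
Qed.

End SqLemmas.

Lemma num_ineq M a c E E3 : 2 <= M -> E3 <= E -> 2*a + c <= 4*M - 4 ->
  a + c <= 3*M - 2 -> a*(2*E - E3) + c*E <= (4*M-4)*E - (M-2)*E3.
Proof. move=> *. nia. Qed.

Definition beta n k := (2 * e n.-1 k - e n.-2 k)%N.

Lemma beta_id m k : ((2 ^ k.+1).-1 * beta m.+3 k.+1 =
   (4 * 2 ^ m.+1 - 4) * e m.+1 k - (2 ^ m.+1 - 2) * e m k)%N.
Proof.
rewrite /beta /= mulnBr mulnCA !e_rec; congr (_ - _)%N.
rewrite mulnA; congr (_ * _)%N; rewrite !expnS; lia.
Qed.

Lemma card_pred_sub (T : finType) (A B : {set T}) :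
  B \subset A -> #|[pred x in A | x \in B]| = #|B|.
Proof.
move=> sBA; apply: eq_card => x; rewrite !inE.
by case xB: (x \in B); rewrite ?(subsetP sBA _ xB) ?andbF.
Qed.

Lemma main_bound n : forall (gT : finGroupType) (K : {group gT}) z k,
  cls K z -> #|K| = (2 ^ n)%N -> (exists2 y, y \in K & y ^+ 2 != 1) ->
  Bc K z k <= beta n k.
Proof.
elim: n => [|n IH] gT K z k c oK [y Ky ny]; have [Zz nz z2 h] := c;
  have Kz : z \in K by case/centerP: Zz.
  move: oK; rewrite expn0 => /eqP; rewrite -trivg_card1 => /eqP K1.
  by move: Kz nz; rewrite K1 inE => ->.
have y2 : y ^+ 2 = z by case: (h y Ky) => // e; rewrite e eqxx in ny.
case: n IH oK => [|n] IH oK.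
  by move: ny; rewrite -[2]/(2 ^ 1)%N -oK expg_cardG // eqxx.
case: k => [|k].
  rewrite Bc0 // /beta /= e0; case: n {IH oK} => [|n]; first by rewrite e_0k.
  by rewrite e0.
rewrite -(leq_pmul2l (_ : 0 < (2 ^ k.+1).-1)); last first.
  by rewrite -ltnS prednK ?expn_gt0 // (ltn_exp2l 0).
rewrite pair_count //.
set S := [set x in K | x ^+ 2 == 1%g].
set O := [set x in K | (x ^+ 2 == 1%g) && (x \in 'Z(K))].
set b1 := beta n.+1 k.
set e1 := e n k.
have sOS : O \subset S by apply/subsetP => x; rewrite !inE => /andP[-> /andP[-> _]].
have sSK : S \subset K by apply/subsetP => x; rewrite inE => /andP[].
have s1O : [set 1%g; z] \subset O.
  apply/subsetP => x; rewrite !inE => /orP[] /eqP ->.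
    by rewrite group1 expg1n eqxx group1.
  by move: Zz; rewrite !inE Kz z2 eqxx.
apply: (@leq_trans (\sum_(x in K) ((x \in O :\: [set 1%g; z]) * b1 + (x \in S :\: O) * e1))%N).
  apply: leq_sum => x Kx; rewrite /wt.
  case: ifP => // /and3P[/eqP x2 nx1 nxz].
  have [j [oj hj]] := Kx_pow c Kx x2 nx1 nxz oK.
  have cx := cls_Kx c Kx x2 nx1 nxz.
  move: hj; case: ifP => Zx hj.
    have -> : x \in O :\: [set 1%g; z].
      rewrite in_setD in_set2 negb_or nx1 nxz /=; apply/setIdP; split => //.
      by rewrite x2 eqxx Zx.
    rewrite mul1n; apply: leq_trans (leq_addr _ _).
    move: oj; case: hj => -> oj; apply: (IH _ _ _ _ cx oj).
    have Cy : y \in 'C_K[x].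
      rewrite inE Ky /=; apply/cent1P; apply: commute_sym.
      by case/centerP: Zx => _; apply.
    have Ny : y \in 'N(<[x]>) by apply: (subsetP (Kx_norm K x)).
    exists (coset <[x]> y); first exact: mem_quotient.
    have [_ nq _ _] := cx.
    by rewrite -morphX // y2.
  have -> : x \in S :\: O.
    rewrite in_setD; apply/andP; split; last by apply/setIdP; rewrite x2 eqxx.
    by apply/negP => /setIdP[_ /andP[_ Zx']]; rewrite Zx' in Zx.
  rewrite mul1n; apply: leq_trans (leq_addl _ _).
  apply: leq_trans (gen_bound k cx oj) _.
  by apply: e_monoS; rewrite -ltnS.
rewrite big_split /= -!big_distrl /= !sum_bool_card.
rewrite !card_pred_sub; last 2 first.
- by apply: subset_trans (subsetDl _ _) sSK.
- by apply: subset_trans (subsetDl _ _) (subset_trans sOS sSK).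
rewrite !cardsD !(setIidPr _) // cards2 eq_sym nz /=.
have oO2 : (2 <= #|O|)%N by move: (subset_leq_card s1O); rewrite cards2 eq_sym nz.
have oOS := subset_leq_card sOS.
have hSO := S_Omega c (ex_intro2 _ _ y Ky ny); rewrite -/S -/O in hSO.
rewrite /b1 /e1; clear b1 e1.
case: n IH oK hSO => [|m] IH oK hSO.
  move: hSO oO2 oOS; rewrite oK !expnS expn0; move: #|O| #|S| => o s h1 h2 h3.
  have -> : o = 2 by lia.
  have -> : s = 2 by lia.
  by rewrite subnn !mul0n.
have hS : (4 * #|S| <= 3 * 2 ^ m.+3)%N.
  case: (boolP (abelian K)) => ab; last by rewrite -oK; apply: (three_q c ab).
  have eSO : O = S.
    apply/setP => x; apply/setIdP/setIdP => [[Kx /andP[-> _]] | [Kx x2]] //.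
    split => //; rewrite x2 /=; apply/centerP; split => // w Kw.
    exact: (centsP ab).
  move: hSO; rewrite eSO oK !expnS; lia.
rewrite beta_id /beta /=.
apply: num_ineq.
- by rewrite (ltn_exp2l 0).
- exact: e_mono.
- move: hSO oO2 oOS; rewrite oK !expnS; move: #|O| #|S| (2 ^ m)%N => o s p; lia.
- move: hS oO2 oOS; rewrite !expnS; move: #|O| #|S| (2 ^ m)%N => o s p; lia.
Qed.


Lemma quo_card (gT : finGroupType) (K : {group gT}) z :
  cls K z -> (#|K / <[z]>| * 2)%N = #|K|.
Proof.
move=> c; have [Zz nz z2 _] := c; have /centerP[Kz _] := Zz.
have sZ : <[z]> \subset K by rewrite cycle_subG.
rewrite card_quotient ?(cls_norm c) //.
by rewrite -(Lagrange sZ) -(order2 z2 nz) mulnC.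
Qed.

Lemma Ac0 (gT : finGroupType) (K : {set gT}) z : z != 1 -> Ac K z 0 = 0%N.
Proof.
move=> nz; apply: eq_card0 => H; rewrite !inE; apply/negP => /and3P[_ oH zH].
have H1 : H = 1%G by apply/val_inj; apply: card_le1_trivg; rewrite (eqP oH).
by move: zH; rewrite H1 inE (negPf nz).
Qed.

Lemma s_k_triv (gT : finGroupType) (K : {group gT}) j :
  #|K| = 1%N -> s_k K j.+1 = 0%N.
Proof.
move=> oK; apply: eq_card0 => H; rewrite !inE; apply/negP => /andP[sHK oH].
have := subset_leq_card sHK; rewrite oK (eqP oH).
by rewrite -[1%N]/(2 ^ 0)%N leq_exp2l.
Qed.

Lemma exp2_s_k m : forall (gT : finGroupType) (P : {group gT}) j,
  exp2 P -> #|P| = (2 ^ m)%N -> s_k P j = Fc m j.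
Proof.
elim: m => [|m IH] gT P j ex oP.
  rewrite /Fc; case: j => [|j]; first by rewrite !s_k0.
  by rewrite !s_k_triv // card_Em.
have key : forall (hT : finGroupType) (Q : {group hT}), exp2 Q -> #|Q| = (2 ^ m.+1)%N ->
    s_k Q j = ((if j is j'.+1 then Fc m j' else 0) + e m.+1 j)%N.
  move=> hT Q exQ oQ.
  have [w Qw nw] : exists2 w, w \in Q & w != 1.
    apply/trivgPn; rewrite trivg_card1 oQ.
    by rewrite -[1%N]/(2 ^ 0)%N eqn_exp2l.
  have cw := exp2_cls exQ Qw nw.
  rewrite (part_count _ w) (exp2_Bc j exQ Qw nw oQ); congr (_ + _)%N.
  case: j => [|j]; first exact: Ac0.
  have [Zw _ w2 _] := cw.
  rewrite Ac_succ //; apply: IH; first exact: cls_quo_exp2 cw.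
  apply/eqP; rewrite -(eqn_pmul2r (isT : 0 < 2)) quo_card // oQ expnSr.
  by [].
by rewrite key // /Fc key //; [apply: Em_exp2 | apply: card_Em].
Qed.

Lemma G_cls (gT : finGroupType) (G : {group gT}) z :
  2.-group G -> 'Phi(G) = G^`(1) -> #|G^`(1)| = 2 -> z \in G^`(1) -> z != 1 ->
  [/\ cls G z, G^`(1) = <[z]> & exists2 y, y \in G & y ^+ 2 != 1].
Proof.
move=> pG ePhi oD Dz nz.
have z2 : z ^+ 2 = 1 by rewrite -oD expg_cardG.
have eD : G^`(1) = <[z]>.
  apply/eqP; rewrite eq_sym eqEcard cycle_subG Dz /= oD.
  exact: (eq_leq (esym (order2 z2 nz))).
have Gz : z \in G by apply: (subsetP (der_sub 1 G)).
have Zz : z \in 'Z(G).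
  apply/centerP; split => // g Gg.
  have : z ^ g \in G^`(1) by rewrite memJ_norm // (subsetP (normal_norm (der_normal 1 G))).
  rewrite eD (cycle2g (order2 z2 nz)) !inE conjg_eq1 (negPf nz) /= => /eqP e.
  by apply/commgP; apply/conjg_fixP.
have sq : forall x, x \in G -> x ^+ 2 = 1 \/ x ^+ 2 = z.
  move=> x Gx.
  have : x ^+ (2 ^ 1) \in 'Mho^1(G) by apply: Mho_p_elt => //; apply: mem_p_elt pG Gx.
  move/(subsetP (joing_subr (G^`(1)) _)); rewrite -(Phi_joing pG) ePhi eD.
  rewrite (cycle2g (order2 z2 nz)) !inE => /orP[] /eqP ->; by [left | right].
split => //.
case: (boolP [exists x in G, x ^+ 2 != 1]) => [/exists_inP [y Gy ny] | hG].
  by exists y.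
have ab : abelian G.
  apply: exp2_abelian => x Gx; apply/eqP; apply: contraR hG => nx.
  by apply/exists_inP; exists x.
by move: oD; move/derG1P: ab => ->; rewrite cards1.
Qed.


Lemma klein (gT : finGroupType) (K : {group gT}) z t :
  cls K z -> t \in K -> t ^+ 2 = 1 -> t \notin <[z]> ->
  [/\ exp2 (<[z]> <*> <[t]>)%G, #|<[z]> <*> <[t]>| = 4%N,
      z \in <[z]> <*> <[t]>, t \in <[z]> <*> <[t]> & <[z]> <*> <[t]> \subset K].
Proof.
move=> c Kt t2 ntz; have [Zz nz z2 h] := c; have /centerP[Kz cz] := Zz.
have nt1 : t != 1 by apply: contraNneq ntz => ->; apply: group1.
have ct : <[t]> \subset 'C(<[z]>) by apply: cents_cycle; apply: commute_sym; apply: cz.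
have eA : <[z]> <*> <[t]> = <[z]> * <[t]> := cent_joinEr ct.
have ot : #|<[t]>| = 2 := order2 t2 nt1.
have oz : #|<[z]>| = 2 := order2 z2 nz.
split.
- move=> a; rewrite /= eA => /mulsgP[u w Zu Tw ->].
  have sTK : <[t]> \subset K by rewrite cycle_subG.
  have Kw := subsetP sTK w Tw.
  rewrite expgMn; last exact: (cls_cent c Zu Kw).
  by rewrite -{1}oz expg_cardG // -ot expg_cardG // mulg1.
- rewrite eA TI_cardMg ?oz ?ot //.
  by rewrite setIC prime_TIg ?ot // cycle_subG.
- by rewrite eA; apply/mulsgP; exists z 1; rewrite ?mulg1 ?cycle_id ?group1.
- by rewrite eA; apply/mulsgP; exists 1 t; rewrite ?mul1g ?cycle_id ?group1.
- by rewrite join_subG !cycle_subG Kz Kt.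
Qed.

Lemma D8_data : exists x y : 'D_8,
  [/\ cls [set: 'D_8]%G (x ^+ 2), y ^+ 2 = 1, (x * y) ^+ 2 = 1,
      y \notin <[x ^+ 2]> & x * y \notin <[x ^+ 2]>].
Proof.
have [[x y] genG [oy xy]] := @generators_2dihedral _ [set: 'D_8]%G 3 isT (isog_refl _).
have [[_ inv2 _] [dG ePhi oD _] _ _ _] := @dihedral2_structure _ [set: 'D_8]%G 3 x y isT genG (isog_refl _).
have [oG Gx ox Gy] := genG.
have nXy : y \notin <[x]> by case/setDP: Gy.
have sX2 : <[x ^+ 2]> \subset <[x]> by rewrite cycle_subG groupX // cycle_id.
have nXxy : x * y \notin <[x]>.
  by apply: contra nXy => Xxy; rewrite -(mulKg x y) groupM ?groupV // cycle_id.
have nz : x ^+ 2 != 1.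
  by rewrite -order_dvdn ox.
have pG : 2.-group [set: 'D_8]%G by rewrite pgroupE oG.
have Dz : x ^+ 2 \in ([set: 'D_8]%G)^`(1) by rewrite dG cycle_id.
have [c _ _] := G_cls pG ePhi oD Dz nz.
exists x, y; split => //.
- by move: (expg_order y); rewrite oy.
- have : #[x * y] = 2 by apply: inv2; rewrite inE nXxy in_setT.
  by move=> o; move: (expg_order (x * y)); rewrite o.
- by apply: contra nXy; apply: (subsetP sX2).
- by apply: contra nXxy; apply: (subsetP sX2).
Qed.

Lemma arith_aux u a b : (u + b = a + a -> 2 * a - b <= u)%N.
Proof. lia. Qed.

Section DProd.
Variable m : nat.
Local Notation T := (D8xC2 m).

Lemma sq_pair (a : T) : a ^+ 2 = (a.1 ^+ 2, a.2 ^+ 2).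
Proof. by rewrite !expgS !expg0 !mulg1. Qed.

Lemma card_D : #|[set: T]| = (2 ^ m.+3)%N.
Proof.
rewrite cardsT card_prod -cardsT (@card_2dihedral 3) // -cardsT card_Em.
by rewrite !expnS expn0 !mulnA.
Qed.

Lemma D_main : exists zD : T,
  cls [set: T]%G zD /\ forall k, beta m.+3 k <= Bc [set: T] zD k.
Proof.
have [x [y [c y2 xy2 ny nxy]]] := D8_data.
set z0 := x ^+ 2 in c ny nxy *.
have [Zz0 nz0 z02 h0] := c; have /centerP[_ cz0] := Zz0.
pose zD : T := (z0, 1).
have nzD : zD != 1.
  by apply: contra nz0 => /eqP e; apply/eqP; apply: (congr1 fst e).
have cD : cls [set: T]%G zD.
  split => //.
  - apply/centerP; split; first exact: in_setT.
    move=> [a b] _; rewrite /commute /=.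
    change ((z0 * a, 1 * b) = (a * z0, b * 1)); rewrite mul1g mulg1.
    by rewrite (cz0 a (in_setT a)).
  - by rewrite sq_pair /= z02 expg1n.
  - move=> [a b] _; rewrite sq_pair /= (Em_exp2 (in_setT b)).
    by case: (h0 a (in_setT a)) => ->; [left | right].
exists zD; split => // k.
have [ex1 o1 zA1 yA1 _] := klein c (in_setT y) y2 ny.
have [ex2 o2 zA2 xyA2 _] := klein c (in_setT (x * y)) xy2 nxy.
set A1 := (<[z0]> <*> <[y]>)%G in ex1 o1 zA1 yA1.
set A2 := (<[z0]> <*> <[x * y]>)%G in ex2 o2 zA2 xyA2.
have oB : #|A1 :&: A2| = 2%N.
  have : #|A1 :&: A2| %| 2 ^ 2 by move: (cardSg (subsetIl A1 A2)); rewrite o1.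
  case/(@dvdn_pfactor 2 _ _ isT) => i; rewrite leq_eqVlt ltnS leq_eqVlt ltnS leqn0.
  have zB : <[z0]> \subset A1 :&: A2 by rewrite cycle_subG inE zA1 zA2.
  have h2 : 2 <= #|A1 :&: A2| by move: (subset_leq_card zB); rewrite -orderE (order2 z02 nz0).
  case/or3P => /eqP -> oB //; first last.
    by rewrite oB expn0 in h2.
  have eB1 : A1 :&: A2 = A1.
    by apply/eqP; rewrite eqEcard subsetIl oB o1.
  have eB2 : A1 :&: A2 = A2.
    by apply/eqP; rewrite eqEcard subsetIr oB o2.
  have yA2 : y \in A2 by rewrite -eB2 eB1.
  have xA2 : x \in A2 by rewrite -(mulgK y x) groupM ?groupV.
  by move: nz0; rewrite /z0 (ex2 _ xA2) eqxx.
set E := [set: 'rV['Z_2]_m]%G.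
have exP (A : {group 'D_8}) : exp2 A -> exp2 (setX A E).
  move=> exA [a b]; rewrite in_setX => /andP[aA _].
  by rewrite sq_pair /= exA // (Em_exp2 (in_setT b)).
have zP (A : {group 'D_8}) : z0 \in A -> zD \in setX A E.
  by move=> zA; rewrite in_setX zA group1.
have cP (A : {group 'D_8}) : #|setX_group A E| = (#|A| * 2 ^ m)%N.
  by rewrite /= cardsX card_Em.
set P1 := setX_group A1 E.
set P2 := setX_group A2 E.
have eP12 : P1 :&: P2 = setX (A1 :&: A2) E.
  apply/setP => -[a b]; rewrite !inE /=.
  by case: (a \in A1); case: (a \in A2); case: (b \in E).
have exP12 : exp2 (P1 :&: P2)%G.
  by move=> g /setIP[g1 _]; apply: (exP _ ex1).
have zP12 : zD \in (P1 :&: P2)%G by rewrite inE zP ?zP.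
have cP12 : #|(P1 :&: P2)%G| = (2 ^ m.+1)%N by rewrite /= eP12 cardsX oB card_Em expnS.
have cP1 : #|P1| = (2 ^ m.+2)%N by rewrite cP o1 !expnS mulnA mulnC.
have cP2 : #|P2| = (2 ^ m.+2)%N by rewrite cP o2 !expnS mulnA mulnC.
pose S (K : {set T}) := [set H : {group T} | [&& H \subset K, #|H| == (2 ^ k)%N & zD \notin H]].
have b1 : #|S P1| = e m.+2 k by exact: (exp2_Bc k (exP _ ex1) (zP _ zA1) nzD cP1).
have b2 : #|S P2| = e m.+2 k by exact: (exp2_Bc k (exP _ ex2) (zP _ zA2) nzD cP2).
have b12 : #|S (P1 :&: P2)| = e m.+1 k by exact: (exp2_Bc k exP12 zP12 nzD cP12).
change (beta m.+3 k <= #|S [set: T]|).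
set S1 := S P1 in b1 *. set S2 := S P2 in b2 *. set S12 := S (P1 :&: P2) in b12 *.
set SD := S [set: T].
have sU : S1 :|: S2 \subset SD.
  apply/subsetP => H; rewrite !inE => /orP[] /and3P[_ -> ->]; by rewrite subsetT.
have eI : S1 :&: S2 = S12.
  apply/setP => H; rewrite !inE subsetI.
  by case: (H \subset P1); case: (H \subset P2); case: (#|H| == _); case: (zD \in H).
have := cardsUI S1 S2; rewrite eI b1 b2 b12 => hU.
apply: leq_trans (subset_leq_card sU).
have -> : beta m.+3 k = (2 * e m.+2 k - e m.+1 k)%N by [].
by apply: arith_aux hU.
Qed.

End DProd.


Lemma Ac_exp2 (gT : finGroupType) (K : {group gT}) z m k :
  cls K z -> #|K| = (2 ^ m.+1)%N -> Ac K z k.+1 = Fc m k.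
Proof.
move=> c oK; have [Zz nz z2 _] := c.
rewrite Ac_succ //; apply: (@exp2_s_k m _ (K / <[z]>)%G); first exact: cls_quo_exp2 c.
apply/eqP; rewrite -(eqn_pmul2r (isT : 0 < 2)) quo_card // oK expnSr.
by [].
Qed.

Unset Implicit Arguments.

Theorem corollary2p7 (gT : finGroupType) (G : {group gT}) (n : nat) :
  2.-group G -> #|G| = (2 ^ n)%N -> 3 <= n ->
  extraspecial2 G \/ almost_extraspecial2 G ->
  forall k : nat, k <= n ->
    s_k G k <= s_k [set: D8xC2 (n - 3)] k.
Proof.
move=> pG oG n3 hyp k _.
have [ePhi oD] : 'Phi(G) = G^`(1) /\ #|G^`(1)| = 2.
  case: hyp => [[eZ eD oZ] | [eD oD _ _]]; last by split.
  by split; [rewrite eD | rewrite -eZ].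
have [z Dz nz] : exists2 z, z \in G^`(1) & z != 1.
  by apply/trivgPn; rewrite trivg_card1 oD.
have [c _ [y Gy ny]] := G_cls pG ePhi oD Dz nz.
have en : n = (n - 3).+3 by rewrite -addn3 subnK.
move: (n - 3) en => m en; rewrite en in oG.
have [zD [cD lb]] := D_main m.
case: k => [|k]; first by rewrite !s_k0.
rewrite (part_count _ z) (part_count _ zD).
apply: leq_add.
  by rewrite (Ac_exp2 k c oG) (Ac_exp2 k cD (card_D m)).
apply: leq_trans (lb k.+1).
exact: (main_bound k.+1 c oG (ex_intro2 _ _ y Gy ny)).
Qed.
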